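(* Let $\mathcal B$ be a finite set of finite distributive double p-algebras and consider the corresponding set $\mathcal Y=\{H(\mathbf A^\flat)\mid \mathbf A\in\mathcal B\}$ of finite ordered sets. The following are equivalent: (1) the algebras in $\mathcal B$ are quasi-primal and share a common ternary discriminator term; (2) each $\mathbf A\in\mathcal B$ is simple; (3) each $\mathbf A\in\mathcal B$ is directly indecomposable and regular, that is, $\mathbf A$ satisfies $[a^*=b^*\ \&\ a^+=b^+]\Rightarrow a=b$; (4) each $\mathbb X\in\mathcal Y$ is connected and every element of $\mathbb X$ is either maximal or minimal.
   Context: A distributive double p-algebra is an algebra $\mathbf A=\langle A;\vee,\wedge,{}^*,{}^+,0,1\rangle$ such that $\mathbf A^\flat=\langle A;\vee,\wedge,0,1\rangle$ is a bounded distributive lattice and ${}^*,{}^+$ are unary operations with $x\wedge y=0\iff y\le x^*$ and $x\vee y=1\iff y\ge x^+$. For a finite bounded distributive lattice $\mathbf L$, $H(\mathbf L)$ is the ordered set of all bounded-lattice homomorphisms $\mathbf L\to\mathbf 2$ ordered pointwise (the Priestley dual of $\mathbf L$). The ternary discriminator on $A$ is $\tau(x,y,z)=x$ if $x\ne y$, $=z$ if $x=y$; a finite algebra is quasi-primal if $\tau$ is a term function; a family shares a common ternary discriminator term if one ternary term induces $\tau$ on every member. *)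

(* Defs.v *)
From mathcomp Require Import all_boot.
From Stdlib Require Import Relations.Relation_Operators.

Set Implicit Arguments.
Unset Strict Implicit.
Unset Printing Implicit Defensive.

(* A finite distributive double p-algebra
   <A; \/, /\, *, +, 0, 1>: the reduct <A; \/, /\, 0, 1> is a bounded
   distributive lattice (lattice order: y <= x iff y /\ x = y), and
   x /\ y = 0 <-> y <= x^*,   x \/ y = 1 <-> y >= x^+. *)
Record ddpa := DDPA {
  car :> finType;
  jn : car -> car -> car;
  mt : car -> car -> car;
  st : car -> car;
  pl : car -> car;
  bot : car;
  top : car;
  jnC : forall x y, jn x y = jn y x;
  jnA : forall x y z, jn x (jn y z) = jn (jn x y) z;
  mtC : forall x y, mt x y = mt y x;
  mtA : forall x y z, mt x (mt y z) = mt (mt x y) z;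
  absJM : forall x y, jn x (mt x y) = x;
  absMJ : forall x y, mt x (jn x y) = x;
  distr : forall x y z, mt x (jn y z) = jn (mt x y) (mt x z);
  botJ : forall x, jn bot x = x;
  topM : forall x, mt top x = x;
  stP : forall x y, mt x y = bot <-> mt y (st x) = y;
  plP : forall x y, jn x y = top <-> mt (pl x) y = pl x
}.

Inductive term (n : nat) : Type :=
  | TVar of 'I_n
  | TJn of term n & term n
  | TMt of term n & term n
  | TSt of term n
  | TPl of term n
  | TBot
  | TTop.

Fixpoint eval (A : ddpa) n (e : 'I_n -> A) (t : term n) : A :=
  match t with
  | TVar i => e i
  | TJn t1 t2 => jn (eval e t1) (eval e t2)
  | TMt t1 t2 => mt (eval e t1) (eval e t2)
  | TSt t1 => st (eval e t1)
  | TPl t1 => pl (eval e t1)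
  | TBot => bot A
  | TTop => top A
  end.

Definition discr (A : ddpa) (x y z : A) : A := if x == y then z else x.

Definition induces_discr (A : ddpa) (t : term 3) : Prop :=
  forall x y z : A, eval (fun i : 'I_3 => nth x [:: x; y; z] i) t = discr x y z.

Definition quasi_primal (A : ddpa) : Prop := exists t : term 3, induces_discr A t.

Definition nontrivial (A : ddpa) : Prop := exists x y : A, x <> y.

Definition congruence (A : ddpa) (th : rel A) : Prop :=
  [/\ (forall x, th x x), (forall x y, th x y -> th y x),
      (forall x y z, th x y -> th y z -> th x z),
      (forall x x' y y', th x x' -> th y y' ->
          th (jn x y) (jn x' y') /\ th (mt x y) (mt x' y')) &
      (forall x x', th x x' -> th (st x) (st x') /\ th (pl x) (pl x'))].

Definition simple (A : ddpa) : Prop :=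
  nontrivial A /\
  forall th : rel A, congruence th ->
    (forall x y, th x y -> x = y) \/ (forall x y, th x y).

Definition hom_prod (A B C : ddpa) (f : A -> B * C) : Prop :=
  [/\ (forall x y, f (jn x y) = (jn (f x).1 (f y).1, jn (f x).2 (f y).2)),
      (forall x y, f (mt x y) = (mt (f x).1 (f y).1, mt (f x).2 (f y).2)),
      (forall x, f (st x) = (st (f x).1, st (f x).2)),
      (forall x, f (pl x) = (pl (f x).1, pl (f x).2)) &
      f (bot A) = (bot B, bot C) /\
      f (top A) = (top B, top C)].

Definition dir_indec (A : ddpa) : Prop :=
  nontrivial A /\
  ~ (exists (B C : ddpa) (f : A -> B * C),
        [/\ bijective f, hom_prod f, nontrivial B & nontrivial C]).

Definition regular (A : ddpa) : Prop :=
  forall a b : A, st a = st b -> pl a = pl b -> a = b.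

(* H(A^flat): bounded-lattice homomorphisms A -> 2, ordered pointwise *)
Definition lat_hom_b (A : ddpa) (f : {ffun A -> bool}) : bool :=
  [&& [forall x, forall y, f (jn x y) == f x || f y],
      [forall x, forall y, f (mt x y) == f x && f y],
      f (bot A) == false & f (top A) == true].

Definition H (A : ddpa) := {f : {ffun A -> bool} | lat_hom_b f}.

Definition Hle (A : ddpa) (f g : H A) : Prop :=
  forall x : A, val f x -> val g x.

Definition Hmaximal (A : ddpa) (f : H A) : Prop :=
  forall g : H A, Hle f g -> g = f.
Definition Hminimal (A : ddpa) (f : H A) : Prop :=
  forall g : H A, Hle g f -> g = f.

Definition Hconnected (A : ddpa) : Prop :=
  inhabited (H A) /\
  forall f g : H A,
    clos_refl_trans (H A) (fun u v => Hle u v \/ Hle v u) f g.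

(* Main.v *)
Require Import Defs.
From mathcomp Require Import all_boot.
From Stdlib Require Import Relations.Relation_Operators Classical ClassicalEpsilon.

Ltac bfin := intros; simpl in *;
  repeat match goal with H : is_true true -> _ |- _ => specialize (H isT) end;
  repeat match goal with H : is_true false -> _ |- _ => clear H end;
  first [ done | match goal with H : is_true false |- _ => discriminate H end ].

Set Implicit Arguments.
Unset Strict Implicit.
Unset Printing Implicit Defensive.


Section Lat.
Variable A : ddpa.
Implicit Types x y z : A.

Lemma mtI x : mt x x = x.
Proof. by rewrite -{2}(absJM x x) absMJ. Qed.
Lemma mt0 x : mt (bot A) x = bot A.
Proof. by rewrite -{1}(botJ x) absMJ. Qed.
Lemma mtx0 x : mt x (bot A) = bot A.
Proof. by rewrite mtC mt0. Qed.
Lemma jn1 x : jn (top A) x = top A.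
Proof. by rewrite -{1}(topM x) absJM. Qed.
Lemma mt1 x : mt x (top A) = x.
Proof. by rewrite mtC topM. Qed.
Lemma jn0 x : jn x (bot A) = x.
Proof. by rewrite jnC botJ. Qed.

Lemma le_trans x y z : mt x y = x -> mt y z = y -> mt x z = x.
Proof. by move=> h1 h2; rewrite -h1 -mtA h2. Qed.

Lemma le_antisym x y : mt x y = x -> mt y x = y -> x = y.
Proof. by move=> h1 h2; rewrite -h1 mtC h2. Qed.

Lemma le_jn x y z : mt x z = x -> mt y z = y -> mt (jn x y) z = jn x y.
Proof. by move=> h1 h2; rewrite mtC distr mtC h1 mtC h2. Qed.

Lemma mt_jn x y : mt x (jn x y) = x.
Proof. exact: absMJ. Qed.

Definition hv (f : H A) (x : A) : bool := val f x.

Lemma hvP (f : H A) : lat_hom_b (val f). Proof. exact: valP. Qed.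

Lemma hvJ f x y : hv f (jn x y) = hv f x || hv f y.
Proof. by move: (hvP f) => /and4P [/forallP /(_ x) /forallP /(_ y) /eqP]. Qed.
Lemma hvM f x y : hv f (mt x y) = hv f x && hv f y.
Proof. by move: (hvP f) => /and4P [_ /forallP /(_ x) /forallP /(_ y) /eqP]. Qed.
Lemma hv0 f : hv f (bot A) = false.
Proof. by move: (hvP f) => /and4P [_ _ /eqP]. Qed.
Lemma hv1 f : hv f (top A) = true.
Proof. by move: (hvP f) => /and4P [_ _ _ /eqP]. Qed.

Lemma sep x y : mt x y <> x -> exists f : H A, hv f x && ~~ hv f y.
Proof.
move=> nxy.
pose S := [pred z : A | (mt z x == z) && (mt z y != z)].
have Sx : S x by rewrite /= mtI eqxx; apply/eqP.
pose dn z := #|[pred w : A | mt w z == w]|.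
case: (arg_minnP dn Sx) => j /andP [/eqP jx /eqP jy] minj.
have key : forall a, mt a j = a -> a <> j -> mt a y = a.
  move=> a aj naj; apply/eqP; apply: contraT => nay.
  have Sa : S a by rewrite /= nay (le_trans aj jx) eqxx.
  suff : dn a < dn j by rewrite ltnNge minj.
  apply: proper_card; apply/andP; split.
    by apply/subsetP => w; rewrite !inE => /eqP wa; apply/eqP; apply: le_trans wa aj.
  apply/negP => /subsetP /(_ j); rewrite !inE mtI eqxx => /(_ isT) /eqP ja.
  by apply: naj; apply: le_antisym.
have prime : forall p q, mt j (jn p q) = j -> mt j p = j \/ mt j q = j.
  move=> p q jpq.
  case: (eqVneq (mt j p) j) => [|hp]; first by left.
  case: (eqVneq (mt j q) j) => [|hq]; first by right.
  exfalso; apply: jy.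
  have e1 : mt (mt j p) j = mt j p by rewrite mtC mtA mtI.
  have e2 : mt (mt j q) j = mt j q by rewrite mtC mtA mtI.
  have a1 := key _ e1 (elimN eqP hp).
  have a2 := key _ e2 (elimN eqP hq).
  by rewrite -jpq distr; apply: le_jn.
have hb : lat_hom_b [ffun z => mt j z == j].
  apply/and4P; split.
  - apply/forallP => p; apply/forallP => q; rewrite !ffunE.
    apply/eqP; apply/idP/idP.
      by move/eqP/prime => [] ->; rewrite eqxx ?orbT.
    by case/orP => /eqP h; apply/eqP; rewrite distr h ?absJM // jnC absJM.
  - apply/forallP => p; apply/forallP => q; rewrite !ffunE.
    apply/eqP; apply/idP/idP.
      move/eqP => h; apply/andP; split; apply/eqP.
        by rewrite -{1}h -mtA [mt (mt p q) p]mtC (mtA p p q) mtI h.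
      by rewrite -{1}h -!mtA mtI h.
    by case/andP => /eqP h1 /eqP h2; rewrite mtA h1 h2.
  - rewrite ffunE mtx0 eqbF_neg; apply/eqP => jb.
    by apply: jy; rewrite -jb mt0.
  - by rewrite ffunE mt1 eqxx.
exists (Sub _ hb); rewrite /hv /= !ffunE jx eqxx /=.
by apply/eqP.
Qed.

Lemma hom_ext x y : (forall f : H A, hv f x = hv f y) -> x = y.
Proof.
move=> E; case: (eqVneq x y) => // /eqP nxy; exfalso.
have [h1|h1] : mt x y <> x \/ mt y x <> y.
  by apply: NNPP => /not_or_and [/NNPP h1 /NNPP h2]; apply: nxy; apply: le_antisym.
  by case: (sep h1) => f; rewrite E andbN.
by case: (sep h1) => f; rewrite E andbN.
Qed.


Definition Hleb (f g : H A) := [forall z, hv f z ==> hv g z].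

Lemma HleP f g : reflect (Hle f g) (Hleb f g).
Proof.
apply: (iffP forallP) => h z; first by move=> fz; exact: (implyP (h z)).
by apply/implyP; apply: h.
Qed.

Lemma Hleb_refl f : Hleb f f.
Proof. by apply/forallP => z; apply/implyP. Qed.

Lemma Hleb_trans f g k : Hleb f g -> Hleb g k -> Hleb f k.
Proof.
move=> /forallP h1 /forallP h2; apply/forallP => z; apply/implyP => fz.
by apply: (implyP (h2 z)); apply: (implyP (h1 z)).
Qed.

Lemma hv_mono f g x : Hleb f g -> hv f x -> hv g x.
Proof. by move=> /forallP /(_ x) /implyP. Qed.

Lemma Hle_antisym f g : Hleb f g -> Hleb g f -> f = g.
Proof.
move=> h1 h2; apply: val_inj; apply/ffunP => z.
by apply/idP/idP; [apply: (hv_mono h1) | apply: (hv_mono h2)].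
Qed.

Lemma hv_foldr_mt g s : hv g (foldr (@mt A) (top A) s) = all (hv g) s.
Proof. by elim: s => [|a s IH] /=; rewrite ?hv1 // hvM IH. Qed.
Lemma hv_foldr_jn g s : hv g (foldr (@jn A) (bot A) s) = has (hv g) s.
Proof. by elim: s => [|a s IH] /=; rewrite ?hv0 // hvJ IH. Qed.

Definition jf (f : H A) := foldr (@mt A) (top A) [seq z <- enum A | hv f z].
Definition jif (f : H A) := foldr (@jn A) (bot A) [seq z <- enum A | ~~ hv f z].

Lemma hv_jf g f : hv g (jf f) = Hleb f g.
Proof.
rewrite /jf hv_foldr_mt; apply/idP/idP.
  move/allP => h; apply/forallP => z; apply/implyP => fz; apply: h.
  by rewrite mem_filter fz mem_enum.
move/forallP => h; apply/allP => z; rewrite mem_filter => /andP [fz _].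
exact: (implyP (h z)).
Qed.

Lemma hv_jif g f : hv g (jif f) = ~~ Hleb g f.
Proof.
rewrite /jif hv_foldr_jn; apply/idP/idP.
  case/hasP => z; rewrite mem_filter => /andP [fz _] gz.
  by apply/negP => /forallP /(_ z); rewrite gz (negbTE fz).
case/forallPn => z; rewrite negb_imply => /andP [gz nfz].
by apply/hasP; exists z; rewrite // mem_filter nfz mem_enum.
Qed.

Lemma mt_st x : mt x (st x) = bot A.
Proof. by apply/(stP x (st x)); rewrite mtI. Qed.
Lemma jn_pl x : jn x (pl x) = top A.
Proof. by apply/(plP x (pl x)); rewrite mtI. Qed.

Lemma hv_st f x : hv f (st x) = [forall g, Hleb f g ==> ~~ hv g x].
Proof.
apply/idP/idP.
  move=> fs; apply/forallP => g; apply/implyP => fg; apply/negP => gx.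
  have := hvM g x (st x); rewrite mt_st hv0 gx (hv_mono fg fs) //.
move=> h; apply: contraT => nfs; exfalso.
have ne : mt (jf f) x <> bot A.
  move=> e; have := (stP x (jf f)).1; rewrite mtC e => /(_ erefl) h2.
  apply: (negP nfs).
  have : hv f (jf f) by rewrite hv_jf Hleb_refl.
  by rewrite -h2 hvM => /andP [].
have ne' : mt (mt (jf f) x) (bot A) <> mt (jf f) x by rewrite mtx0 => /esym.
case: (sep ne') => g; rewrite hv0 andbT hvM hv_jf => /andP [fg gx].
by have := implyP (forallP h g) fg; rewrite gx.
Qed.

Lemma hv_pl f x : hv f (pl x) = [exists g, Hleb g f && ~~ hv g x].
Proof.
apply/idP/idP; last first.
  case/existsP => g /andP [gf ngx]; apply: (hv_mono gf).
  by have := hvJ g x (pl x); rewrite jn_pl hv1 (negbTE ngx).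
move=> fp; apply: contraT => nex; exfalso.
have ne : jn x (jif f) <> top A.
  move=> e; have := (plP x (jif f)).1 e => h2.
  by move: fp; rewrite -h2 hvM hv_jif Hleb_refl andbF.
have ne' : mt (top A) (jn x (jif f)) <> top A by rewrite topM.
case: (sep ne') => g; rewrite hv1 /= hvJ negb_or hv_jif negbK => /andP [ngx gf].
by apply: (negP nex); apply/existsP; exists g; rewrite gf ngx.
Qed.

Lemma realize (U : pred (H A)) :
  (forall f g, Hleb f g -> U f -> U g) -> exists e, forall f, hv f e = U f.
Proof.
move=> Uup; exists (foldr (@jn A) (bot A) (map jf (filter U (enum (@predT (H A)))))) => k.
rewrite hv_foldr_jn; apply/hasP/idP.
  case=> z /mapP [g]; rewrite mem_filter => /andP [Ug _] -> /=.
  by rewrite hv_jf => gk; apply: Uup Ug.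
move=> Uk; exists (jf k); last by rewrite hv_jf Hleb_refl.
by apply/mapP; exists k; rewrite // mem_filter Uk mem_enum.
Qed.


Definition maxb (f : H A) := [forall g, Hleb f g ==> (g == f)].
Definition minb (f : H A) := [forall g, Hleb g f ==> (g == f)].

Lemma maxbP f : reflect (Hmaximal f) (maxb f).
Proof.
apply: (iffP forallP) => h g.
  by move/HleP => fg; apply/eqP; exact: (implyP (h g)).
by apply/implyP => /HleP fg; apply/eqP; apply: h.
Qed.
Lemma minbP f : reflect (Hminimal f) (minb f).
Proof.
apply: (iffP forallP) => h g.
  by move/HleP => fg; apply/eqP; exact: (implyP (h g)).
by apply/implyP => /HleP fg; apply/eqP; apply: h.
Qed.

Definition cnt (f : H A) := #|[pred z : A | hv f z]|.

Lemma sub_cnt f g : Hleb f g -> [pred z : A | hv f z] \subset [pred z : A | hv g z].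
Proof. by move=> fg; apply/subsetP => z; rewrite !inE; apply: hv_mono. Qed.

Lemma cnt_eq f g : Hleb f g -> cnt g <= cnt f -> f = g.
Proof.
move=> fg c; have s := sub_cnt fg.
have e : cnt f = cnt g by apply/eqP; rewrite eqn_leq c subset_leq_card.
have := subset_cardP e; rewrite s => /(_ isT) /= eq.
apply: Hle_antisym => //; apply/forallP => z; apply/implyP => gz.
by move: (eq z); rewrite !inE gz.
Qed.

Lemma exists_max g : exists m, Hleb g m && maxb m.
Proof.
case: (@arg_maxnP _ g (Hleb g) cnt (Hleb_refl g)) => m gm mx.
exists m; rewrite gm /=; apply/forallP => k; apply/implyP => mk.
have := cnt_eq mk (mx k (Hleb_trans gm mk)) => ->; exact: eqxx.
Qed.

Lemma exists_min g : exists m, Hleb m g && minb m.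
Proof.
case: (@arg_minnP _ g (fun k => Hleb k g) cnt (Hleb_refl g)) => m gm mx.
exists m; rewrite gm /=; apply/forallP => k; apply/implyP => km.
have := cnt_eq km (mx k (Hleb_trans km gm)) => ->; exact: eqxx.
Qed.

Lemma hv_st_max f x : hv f (st x) = [forall m, (Hleb f m && maxb m) ==> ~~ hv m x].
Proof.
rewrite hv_st; apply/forallP/forallP => h g.
  by apply/implyP => /andP [fg _]; exact: (implyP (h g)).
apply/implyP => fg; apply/negP => gx.
case: (exists_max g) => m /andP [gm mm].
have := implyP (h m); rewrite (Hleb_trans fg gm) mm (hv_mono gm gx).
by move/(_ isT).
Qed.

Lemma hv_pl_min f x : hv f (pl x) = [exists m, [&& Hleb m f, minb m & ~~ hv m x]].
Proof.
rewrite hv_pl; apply/existsP/existsP => [[g /andP [gf ngx]]|[m /and3P [mf _ nmx]]].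
  case: (exists_min g) => m /andP [mg mm]; exists m.
  rewrite (Hleb_trans mg gf) mm /=; apply: contra ngx; exact: hv_mono.
by exists m; rewrite mf nmx.
Qed.

Lemma st_max f x : maxb f -> hv f (st x) = ~~ hv f x.
Proof.
move=> mf; rewrite hv_st; apply/forallP/idP => [h|nfx g].
  by have := implyP (h f) (Hleb_refl f).
by apply/implyP => fg; have := implyP (forallP mf g) fg => /eqP ->.
Qed.

Lemma pl_min f x : minb f -> hv f (pl x) = ~~ hv f x.
Proof.
move=> mf; rewrite hv_pl; apply/existsP/idP => [[g /andP [gf ngx]]|nfx].
  by have := implyP (forallP mf g) gf => /eqP <-.
by exists f; rewrite Hleb_refl.
Qed.

Lemma bad f : ~~ maxb f -> ~~ minb f ->
  exists a b : A, [/\ a <> b, st a = st b, pl a = pl b &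
                      forall k, k != f -> hv k a = hv k b].
Proof.
case/forallPn => g; rewrite negb_imply => /andP [fg gf].
case/forallPn => h; rewrite negb_imply => /andP [hf hnf].
have [a Ha] : exists a, forall k, hv k a = Hleb f k.
  by apply: realize => k l kl fk; exact: Hleb_trans fk kl.
have [b Hb] : exists b, forall k, hv k b = Hleb f k && (k != f).
  apply: realize => k l kl /andP [fk kf]; rewrite (Hleb_trans fk kl) /=.
  apply: contra kf => /eqP lf; subst l; apply/eqP; exact: Hle_antisym.
exists a, b; split.
- by move=> ab; have := Hb f; rewrite -ab Ha Hleb_refl eqxx.
- apply: hom_ext => k; rewrite !hv_st; apply/forallP/forallP => H l; apply/implyP => kl.
    by rewrite Hb negb_and; rewrite -Ha (implyP (H l) kl).
  have := implyP (H l) kl; rewrite Hb Ha negb_and negbK.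
  case/orP => // /eqP lf; subst l.
  by have := implyP (H g) (Hleb_trans kl fg); rewrite Hb fg gf.
- apply: hom_ext => k; rewrite !hv_pl; apply/existsP/existsP => [[l /andP [lk nl]]|[l /andP [lk nl]]].
    by exists l; rewrite lk Hb negb_and -Ha nl.
  move: nl; rewrite Hb negb_and negbK => /orP [nl|/eqP lf].
    by exists l; rewrite lk Ha.
  subst l; exists h; rewrite (Hleb_trans hf lk) Ha /=.
  by apply: contra hnf => fh; apply/eqP; exact: Hle_antisym.
- by move=> k kf; rewrite Ha Hb kf andbT.
Qed.

Lemma reg_depth : regular A -> forall f, maxb f || minb f.
Proof.
move=> reg f; apply: contraT; rewrite negb_or => /andP [m1 m2].
case: (bad m1 m2) => a [b [ab sab pab _]].
by case: ab; apply: reg.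
Qed.

Lemma depth_reg : (forall f, maxb f || minb f) -> regular A.
Proof.
move=> dep a b sab pab; apply: hom_ext => f.
case/orP: (dep f) => m.
  by rewrite -[hv f a]negbK -st_max // sab st_max // negbK.
by rewrite -[hv f a]negbK -pl_min // pab pl_min // negbK.
Qed.

End Lat.

Lemma eval_cong (A : ddpa) (th : rel A) n (e e' : 'I_n -> A) (t : term n) :
  congruence th -> (forall i, th (e i) (e' i)) -> th (eval e t) (eval e' t).
Proof.
case=> hr hs htr hop hst he; elim: t => /=.
- exact: he.
- by move=> t1 IH1 t2 IH2; case: (hop _ _ _ _ IH1 IH2).
- by move=> t1 IH1 t2 IH2; case: (hop _ _ _ _ IH1 IH2).
- by move=> t1 IH1; case: (hst _ _ IH1).
- by move=> t1 IH1; case: (hst _ _ IH1).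
- exact: hr.
- exact: hr.
Qed.

Lemma H_inhab (A : ddpa) : bot A <> top A -> exists f : H A, True.
Proof.
move=> nt; apply: NNPP => nf; apply: nt; apply: hom_ext => f.
by exfalso; apply: nf; exists f.
Qed.

Lemma qp_simple (A : ddpa) (t : term 3) :
  induces_discr A t -> bot A <> top A -> simple A.
Proof.
move=> hd nt; split; first by exists (bot A), (top A).
move=> th hc; case: (classic (forall x y, th x y -> x = y)) => [h|]; first by left.
case/not_all_ex_not => a; case/not_all_ex_not => b => nimp.
have tab : th a b by apply: contraT => ntab; exfalso; apply: nimp => h; rewrite h in ntab.
have nab : a <> b by move=> e; apply: nimp.
right; case: (hc) => hr hs htr _ _.
have hac : forall c, th a c.
  move=> c.
  have := @eval_cong A th 3 (fun i : 'I_3 => nth a [:: a; b; c] i)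
                            (fun i : 'I_3 => nth a [:: a; a; c] i) t hc.
  rewrite !hd /discr eqxx (negbTE (introN eqP nab)); apply.
  by move=> [[|[|[|m]]] Hi] /=; [exact: hr | exact: hs | exact: hr | exact: hr].
by move=> x y; apply: (htr _ a); [apply: hs|]; apply: hac.
Qed.

Lemma simple_indec (A : ddpa) : simple A -> dir_indec A.
Proof.
case=> nt hs; split => //; case=> B [C [F [[G FG GF] [hJ hM hS hP _] [b1 [b2 nb]] [c1 [c2 nc]]]]].
pose th := fun x y : A => (F x).1 == (F y).1.
have hc : congruence th.
  split.
  - by move=> x; rewrite /th eqxx.
  - by move=> x y; rewrite /th eq_sym.
  - by move=> x y z /eqP h1 /eqP h2; rewrite /th h1 h2.
  - by move=> x x' y y' /eqP h1 /eqP h2; rewrite /th hJ hM /= hJ hM /= h1 h2 !eqxx.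
  - by move=> x x' /eqP h1; rewrite /th hS hP /= hS hP /= h1 !eqxx.
case: (hs th hc) => h.
  have := h (G (b1, c1)) (G (b1, c2)); rewrite /th !GF eqxx => /(_ isT) e.
  by apply: nc; have := congr1 F e; rewrite !GF => -[].
have := h (G (b1, c1)) (G (b2, c1)); rewrite /th !GF /= => /eqP.
exact: nb.
Qed.

Lemma simple_depth (A : ddpa) : simple A -> forall f : H A, maxb f || minb f.
Proof.
case=> [[x0 [y0 nxy]] hs].
pose th := fun x y : A => [forall f, (maxb f || minb f) ==> (hv f x == hv f y)].
have thY : forall x y f, th x y -> (maxb f || minb f) -> hv f x = hv f y.
  by move=> x y f /forallP /(_ f) /implyP h /h /eqP.
have thst : forall x y f, th x y -> hv f (st x) = hv f (st y).
  move=> x y f h; rewrite !hv_st_max; apply: eq_forallb => m.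
  case: (boolP (maxb m)) => mm; last by rewrite !andbF.
  by rewrite (thY x y m h) // mm.
have thpl : forall x y f, th x y -> hv f (pl x) = hv f (pl y).
  move=> x y f h; rewrite !hv_pl_min; apply: eq_existsb => m.
  case: (boolP (minb m)) => mm; last by rewrite !andbF.
  by rewrite (thY x y m h) // mm orbT.
have hc : congruence th.
  split.
  - by move=> x; apply/forallP => f; rewrite eqxx implybT.
  - by move=> x y h; apply/forallP => f; apply/implyP => Yf; rewrite (thY x y f h).
  - by move=> x y z h1 h2; apply/forallP => f; apply/implyP => Yf;
       rewrite (thY x y f h1) // (thY y z f h2).
  - by move=> x x' y y' h1 h2; split; apply/forallP => f; apply/implyP => Yf;
       rewrite ?hvJ ?hvM (thY x x' f h1) // (thY y y' f h2).
  - by move=> x x' h; split; apply/forallP => f; apply/implyP => _;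
       rewrite ?(thst x x' f h) ?(thpl x x' f h).
case: (hs th hc) => h.
  move=> f; apply: contraT; rewrite negb_or => /andP [m1 m2].
  case: (bad m1 m2) => a [b [ab _ _ hk]]; case: ab; apply: h.
  apply/forallP => k; apply/implyP => Yk; rewrite hk //.
  by apply: contraTneq Yk => ->; rewrite negb_or m1.
exfalso.
have [f _] : exists f : H A, True.
  apply: NNPP => nf; apply: nxy; apply: hom_ext => f.
  by exfalso; apply: nf; exists f.
case: (exists_max f) => m /andP [_ mm].
by have := thY _ _ m (h (bot A) (top A)); rewrite mm hv0 hv1 => /(_ isT).
Qed.


Definition clopen (A : ddpa) (c : A) :=
  forall f g : H A, Hleb f g -> hv f c = hv g c.

Lemma clopen_st (A : ddpa) (c : A) : clopen c -> forall f, hv f (st c) = ~~ hv f c.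
Proof.
move=> cc f; rewrite hv_st; apply/forallP/idP => [h|nfc g].
  exact: (implyP (h f) (Hleb_refl f)).
by apply/implyP => fg; rewrite -(cc _ _ fg).
Qed.

Lemma clopen_stc (A : ddpa) (c : A) : clopen c -> clopen (st c).
Proof. by move=> cc f g fg; rewrite !clopen_st // (cc _ _ fg). Qed.

Lemma st_clo (A : ddpa) (c x : A) f : clopen c -> hv f c ->
  hv f (st (mt x c)) = hv f (st x).
Proof.
move=> cc fc; rewrite !hv_st; apply: eq_forallb => g.
case: (boolP (Hleb f g)) => //= fg.
by rewrite hvM -(cc _ _ fg) fc andbT.
Qed.

Lemma pl_clo (A : ddpa) (c x : A) f : clopen c -> hv f c ->
  hv f (pl (mt x c)) = hv f (pl x).
Proof.
move=> cc fc; rewrite !hv_pl; apply: eq_existsb => g.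
case: (boolP (Hleb g f)) => //= gf.
by rewrite hvM (cc _ _ gf) fc andbT.
Qed.

Section Sub.
Variables (A : ddpa) (e : A) (ce : clopen e).

Definition T := {x : A | mt x e == x}.

Lemma inT x : (mt x e == x) = [forall f, hv f x ==> hv f e].
Proof.
apply/eqP/forallP => [h f|h].
  by rewrite -h hvM; apply/implyP => /andP [].
apply: hom_ext => f; rewrite hvM; have := implyP (h f).
by case: (hv f x) => // /(_ isT) ->.
Qed.

Lemma hvT (x : T) f : hv f (val x) -> hv f e.
Proof. by have := valP x; rewrite inT => /forallP /(_ f) /implyP. Qed.

Lemma cl_jn (x y : T) : mt (jn (val x) (val y)) e == jn (val x) (val y).
Proof.
rewrite inT; apply/forallP => f; rewrite hvJ; apply/implyP.
by case/orP; apply: hvT.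
Qed.
Lemma cl_mt (x y : T) : mt (mt (val x) (val y)) e == mt (val x) (val y).
Proof.
rewrite inT; apply/forallP => f; rewrite hvM; apply/implyP.
by case/andP => h _; apply: hvT h.
Qed.
Lemma cl_e (z : A) : mt (mt z e) e == mt z e.
Proof. by rewrite -mtA mtI. Qed.
Lemma cl_bot : mt (bot A) e == bot A.
Proof. by rewrite mt0. Qed.
Lemma cl_top : mt e e == e.
Proof. by rewrite mtI. Qed.

Definition sjn (x y : T) : T := exist (fun z : A => mt z e == z) _ (cl_jn x y).
Definition smt (x y : T) : T := exist (fun z : A => mt z e == z) _ (cl_mt x y).
Definition sst (x : T) : T := exist (fun z : A => mt z e == z) _ (cl_e (st (val x))).
Definition spl (x : T) : T := exist (fun z : A => mt z e == z) _ (cl_e (pl (val x))).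
Definition sbot : T := exist (fun z : A => mt z e == z) _ cl_bot.
Definition stop : T := exist (fun z : A => mt z e == z) _ cl_top.

Lemma valE (u v : T) : u = v <-> val u = val v.
Proof. by split => [->|]; [|apply: val_inj]. Qed.

Lemma s_jnC x y : sjn x y = sjn y x. Proof. by apply/valE; apply: jnC. Qed.
Lemma s_jnA x y z : sjn x (sjn y z) = sjn (sjn x y) z. Proof. by apply/valE; apply: jnA. Qed.
Lemma s_mtC x y : smt x y = smt y x. Proof. by apply/valE; apply: mtC. Qed.
Lemma s_mtA x y z : smt x (smt y z) = smt (smt x y) z. Proof. by apply/valE; apply: mtA. Qed.
Lemma s_absJM x y : sjn x (smt x y) = x. Proof. by apply/valE; apply: absJM. Qed.
Lemma s_absMJ x y : smt x (sjn x y) = x. Proof. by apply/valE; apply: absMJ. Qed.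
Lemma s_distr x y z : smt x (sjn y z) = sjn (smt x y) (smt x z).
Proof. by apply/valE; apply: distr. Qed.
Lemma s_botJ x : sjn sbot x = x. Proof. by apply/valE; apply: botJ. Qed.
Lemma s_topM x : smt stop x = x.
Proof. by apply/valE; rewrite /= mtC; exact: (eqP (valP x)). Qed.
Lemma s_stP x y : smt x y = sbot <-> smt y (sst x) = y.
Proof.
rewrite !valE /= (mtC (st _) e) mtA (eqP (valP y)); exact: stP.
Qed.
Lemma s_plP x y : sjn x y = stop <-> smt (spl x) y = spl x.
Proof.
rewrite !valE /=; split => h.
  apply: hom_ext => f; rewrite !hvM.
  case: (boolP (hv f (pl (val x)))) => //= fp; case: (boolP (hv f e)) => //= fe.
  move: fp; rewrite hv_pl => /existsP [g /andP [gf ngx]].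
  apply: (hv_mono gf); have := hvJ g (val x) (val y).
  by rewrite h (negbTE ngx) (ce gf) fe.
apply: hom_ext => f; rewrite hvJ.
case: (boolP (hv f e)) => fe; last first.
  by apply/negbTE; rewrite negb_or; apply/andP; split; apply: contra fe; apply: hvT.
case: (boolP (hv f (val x))) => //= nfx.
have fp : hv f (pl (val x)) by rewrite hv_pl; apply/existsP; exists f; rewrite Hleb_refl.
by have := congr1 (hv f) h; rewrite !hvM fp fe /= => ->.
Qed.

Definition subA : ddpa :=
  @DDPA T sjn smt sst spl sbot stop s_jnC s_jnA s_mtC s_mtA s_absJM s_absMJ
        s_distr s_botJ s_topM s_stP s_plP.

End Sub.

Lemma decomp (A : ddpa) (e : A) (ce : clopen e) (f g : H A) :
  hv f e -> ~~ hv g e -> ~ dir_indec A.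
Proof.
move=> fe ge [_ []].
have ce' := clopen_stc ce.
have hse := clopen_st ce.
exists (subA ce), (subA ce'),
  (fun x => (exist (fun z : A => mt z e == z) (mt x e) (cl_e e x),
             exist (fun z : A => mt z (st e) == z) (mt x (st e)) (cl_e (st e) x))).
split.
- exists (fun p : subA ce * subA ce' => jn (val p.1) (val p.2)).
    move=> x /=; apply: hom_ext => k; rewrite hvJ !hvM hse.
    by case: (hv k x); case: (hv k e).
  move=> [b c] /=; congr pair; apply: val_inj => /=; apply: hom_ext => k;
    rewrite hvM hvJ ?hse.
    have := @hvT A e b k; have := @hvT A (st e) c k; rewrite hse.
    by case: (hv k (val b)); case: (hv k (val c)); case: (hv k e); bfin.
  have := @hvT A e b k; have := @hvT A (st e) c k; rewrite hse.
  by case: (hv k (val b)); case: (hv k (val c)); case: (hv k e); bfin.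
- split.
  + move=> x y; congr pair; apply: val_inj => /=; apply: hom_ext => k;
      rewrite ?(hvM, hvJ, hse); by case: (hv k x); case: (hv k y); case: (hv k e).
  + move=> x y; congr pair; apply: val_inj => /=; apply: hom_ext => k;
      rewrite ?(hvM, hvJ, hse); by case: (hv k x); case: (hv k y); case: (hv k e).
  + move=> x; congr pair; apply: val_inj => /=; apply: hom_ext => k; rewrite !hvM.
      by case: (boolP (hv k e)) => ke; rewrite ?andbF // !andbT st_clo.
    case: (boolP (hv k (st e))) => ke; rewrite ?andbF // !andbT st_clo //.
  + move=> x; congr pair; apply: val_inj => /=; apply: hom_ext => k; rewrite !hvM.
      by case: (boolP (hv k e)) => ke; rewrite ?andbF // !andbT pl_clo.
    case: (boolP (hv k (st e))) => ke; rewrite ?andbF // !andbT pl_clo //.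
  + by split; congr pair; apply: val_inj => /=; rewrite ?mt0 ?topM.
- exists (@sbot A e), (@stop A e) => /(congr1 val) /= /(congr1 (hv f)).
  by rewrite hv0 fe.
- exists (@sbot A (st e)), (@stop A (st e)) => /(congr1 val) /= /(congr1 (hv g)).
  by rewrite hv0 hse (negbTE ge).
Qed.

Lemma indec_conn (A : ddpa) : dir_indec A -> Hconnected A.
Proof.
move=> di; have [[x0 [y0 nxy]] _] := di.
split.
  apply: NNPP => nf; apply: nxy; apply: hom_ext => f.
  by exfalso; apply: nf; constructor.
move=> f0 g0; apply: NNPP => nc.
pose R := clos_refl_trans (H A) (fun u v => Hle u v \/ Hle v u).
pose U := fun k : H A => if excluded_middle_informative (R f0 k) then true else false.
have UP : forall k, U k <-> R f0 k.
  by move=> k; rewrite /U; case: excluded_middle_informative.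
have Ucl : forall u v, Hleb u v -> U u = U v.
  move=> u v /HleP uv; apply/idP/idP => /UP h; apply/UP.
    by apply: rt_trans h _; apply: rt_step; left.
  by apply: rt_trans h _; apply: rt_step; right.
have [e He] : exists e, forall k, hv k e = U k.
  by apply: realize => u v uv; rewrite (Ucl _ _ uv).
have ce : clopen e by move=> u v uv; rewrite !He (Ucl _ _ uv).
apply: (decomp ce (f := f0) (g := g0)) => //.
  by rewrite He; apply/UP; apply: rt_refl.
by rewrite He; apply/negP => /UP.
Qed.


Definition v0 : 'I_3 := @Ordinal 3 0 isT.
Definition v1 : 'I_3 := @Ordinal 3 1 isT.
Definition v2 : 'I_3 := @Ordinal 3 2 isT.
Definition dT (t : term 3) := TSt (TPl t).
Definition uT (x y : term 3) :=
  TMt (TMt (TSt (TMt (TSt x) (TSt (TSt y)))) (TSt (TMt (TSt y) (TSt (TSt x)))))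
      (TMt (TJn (TPl y) (TPl (TPl x))) (TJn (TPl x) (TPl (TPl y)))).
Definition discT N :=
  let e := iter N dT (uT (TVar v0) (TVar v1)) in
  TJn (TMt (TVar v2) e) (TMt (TVar v0) (TSt e)).

Section Disc.
Variable A : ddpa.
Implicit Types x y z : A.

Definition dd x := st (pl x).
Definition uu x y :=
  mt (mt (st (mt (st x) (st (st y)))) (st (mt (st y) (st (st x)))))
     (mt (jn (pl y) (pl (pl x))) (jn (pl x) (pl (pl y)))).

Lemma eval_iter N (t : term 3) (env : 'I_3 -> A) :
  eval env (iter N dT t) = iter N dd (eval env t).
Proof. by elim: N => //= N ->. Qed.

Lemma st_bot : st (bot A) = top A.
Proof. apply: hom_ext => f; rewrite hv1 hv_st; apply/forallP => g; by rewrite hv0 implybT. Qed.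
Lemma pl_top : pl (top A) = bot A.
Proof.
apply: hom_ext => f; rewrite hv0 hv_pl; apply/negbTE; apply/existsPn => g.
by rewrite hv1 andbF.
Qed.

Lemma dd_top k : iter k dd (top A) = top A.
Proof. by elim: k => //= k ->; rewrite /dd pl_top st_bot. Qed.

Lemma uu_xx x : uu x x = top A.
Proof.
by rewrite /uu !mt_st st_bot !jn_pl !mtI.
Qed.

Lemma uu_neq x y : (forall f : H A, maxb f || minb f) -> x <> y ->
  exists f : H A, hv f (uu x y) = false.
Proof.
move=> dep nxy.
have [f nf] : exists f : H A, hv f x != hv f y.
  apply: NNPP => h; apply: nxy; apply: hom_ext => f.
  by apply/eqP; apply: contraT => nf; exfalso; apply: h; exists f.
exists f; rewrite /uu !hvM.
case/orP: (dep f) => m.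
  rewrite !(st_max _ m, hvM).
  by move: nf; case: (hv f x); case: (hv f y).
rewrite !hvJ !(pl_min _ m).
by move: nf; case: (hv f x); case: (hv f y); rewrite //= !andbF.
Qed.

Lemma hv_dd f x :
  hv f (dd x) = ~~ [exists g, Hleb f g && [exists h, Hleb h g && ~~ hv h x]].
Proof.
rewrite /dd hv_st negb_exists; apply: eq_forallb => g.
by rewrite negb_and -implybE hv_pl.
Qed.

Variable u : A.
Definition Z k := [set f : H A | ~~ hv f (iter k dd u)].

Lemma Zsub k : Z k \subset Z k.+1.
Proof.
apply/subsetP => f; rewrite !inE /= hv_dd negbK => nf.
apply/existsP; exists f; rewrite Hleb_refl /=; apply/existsP; exists f.
by rewrite Hleb_refl.
Qed.

Lemma Zcomp k f g : f \in Z k -> Hleb f g || Hleb g f -> g \in Z k.+1.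
Proof.
rewrite !inE /= hv_dd negbK => nf /orP [fg|gf].
  apply/existsP; exists g; rewrite Hleb_refl /=; apply/existsP; exists f.
  by rewrite fg.
apply/existsP; exists f; rewrite gf /=; apply/existsP; exists f.
by rewrite Hleb_refl.
Qed.

Lemma Zmono k l : Z k \subset Z l -> Z k.+1 \subset Z l.+1.
Proof.
move/subsetP => kl; apply/subsetP => f; rewrite !inE /= !hv_dd !negbK.
case/existsP => g /andP [fg /existsP [h /andP [hg nh]]].
apply/existsP; exists g; rewrite fg /=; apply/existsP; exists h; rewrite hg /=.
by have := kl h; rewrite !inE; apply.
Qed.

Lemma Zsub_iter k m : Z k \subset Z (m + k).
Proof.
elim: m => [|m IH] //; apply: subset_trans IH _; exact: Zsub.
Qed.

Lemma dd_conn N : Hconnected A -> (forall S : {set H A}, #|S| <= N) ->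
  (exists f : H A, hv f u = false) -> iter N dd u = bot A.
Proof.
move=> [_ conn] hN [f0 f0u].
have Z0 : f0 \in Z 0 by rewrite inE /= f0u.
have Q : forall k, (exists2 j, j <= k & Z j.+1 \subset Z j) \/ k.+1 < #|Z k.+1|.
  elim=> [|k [[j jk sj]|IH]].
  - case: (boolP (Z 1 \subset Z 0)) => h; first by left; exists 0.
    right; have : Z 0 \proper Z 1 by rewrite /proper Zsub h.
    move/proper_card; apply: leq_trans.
    by rewrite ltnS; apply/card_gt0P; exists f0.
  - by left; exists j => //; apply: leq_trans jk _.
  - case: (boolP (Z k.+2 \subset Z k.+1)) => h; first by left; exists k.+1.
    right; have : Z k.+1 \proper Z k.+2 by rewrite /proper Zsub h.
    by move/proper_card; apply: leq_trans.
have [j jN sj] : exists2 j, j <= N & Z j.+1 \subset Z j.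
  case: (Q N) => //; move=> h; have := hN (Z N.+1).
  by rewrite leqNgt (ltn_trans _ h).
have stab : forall m, Z (m + j).+1 \subset Z (m + j).
  by elim=> [|m IH] //; rewrite addSn; apply: Zmono.
have sN : Z N.+1 \subset Z N by rewrite -(subnK jN); apply: stab.
have ZN0 : f0 \in Z N by rewrite -(addn0 N); apply: (subsetP (Zsub_iter _ _)).
have step : forall a b, clos_refl_trans (H A) (fun u v => Hle u v \/ Hle v u) a b ->
    a \in Z N -> b \in Z N.
  move=> a b; elim.
  - move=> a' b' [/HleP ab|/HleP ba] aZ; apply: (subsetP sN); apply: Zcomp aZ _;
    by rewrite ?ab ?ba ?orbT.
  - by [].
  - by move=> a' b' c' _ IH1 _ IH2 aZ; apply: IH2; apply: IH1.
have all : forall g, g \in Z N by move=> g; apply: step ZN0.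
apply: hom_ext => g; rewrite hv0.
by have := all g; rewrite inE => /negbTE.
Qed.

End Disc.


Lemma disc_ok (A : ddpa) N : Hconnected A -> (forall f : H A, maxb f || minb f) ->
  (forall S : {set H A}, #|S| <= N) -> induces_discr A (discT N).
Proof.
move=> conn dep hN x y z /=; rewrite eval_iter /= /discr.
case: eqP => [<-|nxy].
  have st1 : st (top A) = bot A by rewrite -(topM (st (top A))) mt_st.
  by rewrite -/(uu x x) uu_xx dd_top mt1 st1 mtx0 jn0.
rewrite -/(uu x y) dd_conn //; last exact: uu_neq.
by rewrite mtx0 botJ st_bot mt1.
Qed.

Theorem theorem4p1 (I : finType) (B : I -> ddpa)
    (Hnt : forall i, bot (B i) <> top (B i)) :
  let P1 := (forall i, quasi_primal (B i)) /\
            (exists t : term 3, forall i, induces_discr (B i) t) in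
  let P2 := forall i, simple (B i) in
  let P3 := forall i, dir_indec (B i) /\ regular (B i) in
  let P4 := forall i, Hconnected (B i) /\
            (forall f : H (B i), Hmaximal f \/ Hminimal f) in
  (P1 <-> P2) /\ (P2 <-> P3) /\ (P3 <-> P4).
Proof.
move=> P1 P2 P3 P4.
have a : P1 -> P2.
  by case=> qp _ i; case: (qp i) => t ht; apply: qp_simple ht (Hnt i).
have b : P2 -> P3.
  move=> h i; split; first exact: simple_indec.
  by apply: depth_reg; apply: simple_depth.
have c : P3 -> P4.
  move=> h i; case: (h i) => di rg; split; first exact: indec_conn.
  move=> f; case/orP: (reg_depth rg f) => [/maxbP|/minbP]; by [left|right].
have d : P4 -> P1.
  move=> h.
  pose N := \sum_(i : I) #|[set: H (B i)]|.
  have ok : forall i, induces_discr (B i) (discT N).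
    move=> i; case: (h i) => conn dep; apply: disc_ok => //.
      by move=> f; case: (dep f) => [/maxbP|/minbP] ->; rewrite ?orbT.
    move=> S; apply: leq_trans (subset_leq_card (subsetT S)) _.
    by rewrite /N (bigD1 i) //= leq_addr.
  by split; [move=> i; exists (discT N) | exists (discT N)].
by split; [|split]; split; auto.
Qed.
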